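(* Let $(u_S,u_R)$ be an environment satisfying scant-indifferences. If a profile $(\sigma,\rho)$ is R-BR and $U_S(\sigma,\rho)$ equals the persuasion payoff, then $\rho$ is pure-on-path, i.e., $\rho(\cdot|m)$ is degenerate for every $m\in M_\sigma$.
   Context: $A=\{a_1,\dots,a_{|A|}\}$ and $\Omega$ are finite nonempty sets, $\mu_0$ a prior on $\Omega$ with $\mu_0(\omega)>0$ for all $\omega$, and $M$ a finite message set with $|M|>\max\{|\Omega|,|A|\}$. An environment is a pair of functions $u_S,u_R:A\times\Omega\to[0,1]$. A messaging strategy is $\sigma:\Omega\to\Delta M$; an action strategy is $\rho:M\to\Delta A$. $U_i(\sigma,\rho)=\sum_{\omega,m,a}\mu_0(\omega)\sigma(m|\omega)\rho(a|m)u_i(a,\omega)$. $(\sigma,\rho)$ is R-BR if $\rho\in\arg\max_{\rho'}U_R(\sigma,\rho')$. The persuasion payoff is the maximum of $U_S$ over R-BR profiles. $M_\sigma=\{m:\sigma(m|\omega)>0\text{ for some }\omega\}$. Scant-indifferences: with $\mathbf u_S(a)=u_S(a,\cdot)\in\mathbb R^{|\Omega|}$, $\mathbf u_R(a)=u_R(a,\cdot)$, for each $i$ the expanded-indifference matrix $T^i$ has $|\Omega|$ columns and rows $\mathbf u_S(a_j)-\mathbf u_S(a_i)$ ($j\ne i$), $\mathbf u_R(a_j)-\mathbf u_R(a_i)$ ($j\ne i$), and the rows of the $|\Omega|\times|\Omega|$ identity; the environment satisfies scant-indifferences if for each $i$ every matrix obtained from $T^i$ by deleting some rows has full rank. *)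

(* Defs.v *)
From HB Require Import structures.
From mathcomp Require Import all_boot all_order all_algebra.
From mathcomp Require Import reals.
Set Implicit Arguments. Unset Strict Implicit. Unset Printing Implicit Defensive.
Import Order.TTheory GRing.Theory Num.Theory.
Local Open Scope ring_scope.

Section Defs.
Variable R : realType.

Definition is_distr (T : finType) (p : T -> R) : Prop :=
  (forall t, 0 <= p t) /\ \sum_(t : T) p t = 1.

Definition degenerate (T : finType) (p : T -> R) : Prop :=
  exists t0 : T, forall t, p t = if t == t0 then 1 else 0.

Variables (A Omega M : finType).

(* messaging strategy sigma : Omega -> Delta M, sigma w m = sigma(m|w) *)
Definition messaging_strategy (sigma : Omega -> M -> R) : Prop :=
  forall w, is_distr (sigma w).

(* action strategy rho : M -> Delta A, rho m a = rho(a|m) *)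
Definition action_strategy (rho : M -> A -> R) : Prop :=
  forall m, is_distr (rho m).

Definition U (mu0 : Omega -> R) (u : A -> Omega -> R)
    (sigma : Omega -> M -> R) (rho : M -> A -> R) : R :=
  \sum_(w : Omega) \sum_(m : M) \sum_(a : A) mu0 w * sigma w m * rho m a * u a w.

Definition R_BR (mu0 : Omega -> R) (uR : A -> Omega -> R)
    (sigma : Omega -> M -> R) (rho : M -> A -> R) : Prop :=
  messaging_strategy sigma /\ action_strategy rho /\
  forall rho' : M -> A -> R, action_strategy rho' ->
    U mu0 uR sigma rho' <= U mu0 uR sigma rho.

(* U_S(sigma, rho) equals the persuasion payoff, i.e. the maximum of U_S over
   R-BR profiles (for an R-BR profile (sigma, rho), this says exactly that
   (sigma, rho) attains that maximum). *)
Definition attains_persuasion_payoff (mu0 : Omega -> R) (uS uR : A -> Omega -> R)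
    (sigma : Omega -> M -> R) (rho : M -> A -> R) : Prop :=
  forall sigma' rho', R_BR mu0 uR sigma' rho' ->
    U mu0 uS sigma' rho' <= U mu0 uS sigma rho.

Definition on_path (sigma : Omega -> M -> R) (m : M) : Prop :=
  exists w, 0 < sigma w m.

Definition pure_on_path (sigma : Omega -> M -> R) (rho : M -> A -> R) : Prop :=
  forall m, on_path sigma m -> degenerate (rho m).

(* Row indices of the expanded-indifference matrix T^i:
   inl (inl j) : row u_S(a_j) - u_S(a_i), j <> i
   inl (inr j) : row u_R(a_j) - u_R(a_i), j <> i
   inr w'      : row e_{w'} of the |Omega| x |Omega| identity *)
Definition T_index (i : A) : finType :=
  (({j : A | j != i} + {j : A | j != i}) + Omega)%type.

Definition T_row (uS uR : A -> Omega -> R) (i : A) (r : T_index i) : Omega -> R :=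
  match r with
  | inl (inl j) => fun w => uS (val j) w - uS i w
  | inl (inr j) => fun w => uR (val j) w - uR i w
  | inr w' => fun w => (w == w')%:R
  end.

Definition T_submx (uS uR : A -> Omega -> R) (i : A) (S : {set T_index i})
  : 'M[R]_(#|S|, #|Omega|) :=
  \matrix_(k < #|S|, l < #|Omega|) T_row uS uR (enum_val k) (enum_val l).

Definition scant_indifferences (uS uR : A -> Omega -> R) : Prop :=
  forall (i : A) (S : {set T_index i}),
    \rank (T_submx uS uR S) = minn #|S| #|Omega|.

End Defs.

(* Main.v *)
Require Import Defs.
From HB Require Import structures.
From mathcomp Require Import all_boot all_order all_algebra.
From mathcomp Require Import reals ring lra zify.
Set Implicit Arguments. Unset Strict Implicit. Unset Printing Implicit Defensive.
Import Order.TTheory GRing.Theory Num.Theory.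
Local Open Scope ring_scope.

Section Gen.
Variable R : realType.

Lemma sum_point (T : finType) (b : T) (f : T -> R) :
  \sum_a (a == b)%:R * f a = f b.
Proof.
rewrite (bigD1 b) //= eqxx mul1r big1 ?addr0 // => a /negbTE ->; by rewrite mul0r.
Qed.

Lemma point_distr (T : finType) (b : T) : is_distr (fun a : T => ((a == b)%:R : R)).
Proof.
split; first by move=> t; case: (t == b).
have := sum_point b (fun _ => 1 : R). under eq_bigr do rewrite mulr1. by [].
Qed.

Lemma distr_le (T : finType) (q f : T -> R) c :
  is_distr q -> (forall b, f b <= c) -> \sum_b q b * f b <= c.
Proof.
move=> [q0 q1] H; apply: le_trans (_ : \sum_b q b * c <= c).
  by apply: ler_sum => b _; apply: ler_wpM2l.
by rewrite -mulr_suml q1 mul1r.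
Qed.

Lemma distr_supp_eq (T : finType) (p f : T -> R) (P : T -> Prop) :
  is_distr p -> (forall b, 0 < p b -> P b) ->
  (forall b, P b -> f b <= \sum_a p a * f a) ->
  forall b, 0 < p b -> f b = \sum_a p a * f a.
Proof.
move=> [p0 p1] HP Hf.
set W := \sum_a p a * f a.
have H0 : \sum_a p a * (W - f a) = 0.
  under eq_bigr do rewrite mulrBr.
  by rewrite sumrB -mulr_suml p1 mul1r subrr.
have Hge : forall a, true -> 0 <= p a * (W - f a).
  move=> a _; have := p0 a; rewrite le_eqVlt => /orP [/eqP <-|pa]; first by rewrite mul0r.
  by apply: mulr_ge0; [exact: ltW | rewrite subr_ge0; apply: Hf; apply: HP].
move=> b pb; have := psumr_eq0P Hge H0 (i:=b) isT.
move/eqP; rewrite mulf_eq0 (gt_eqF pb) /= subr_eq0 => /eqP ->; by [].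
Qed.

Lemma tau_exists (X : finType) (c e : X -> R) :
  (forall x, 0 <= e x) -> (forall x, e x = 0 -> c x <= 0) ->
  exists tau, 0 < tau /\ forall x, tau * c x <= e x.
Proof.
move=> e0 ec.
set S := \sum_x ((`|c x| + 1) / e x).
have S0 : 0 <= S by apply: sumr_ge0 => x _; apply: divr_ge0 => //; exact: addr_ge0.
have S1 : 0 < 1 + S by lra.
exists (1 + S)^-1; split; first by rewrite invr_gt0.
move=> x; have := e0 x; rewrite le_eqVlt => /orP [/eqP ex|ex].
  rewrite -ex; apply: mulr_ge0_le0; [by rewrite invr_ge0 ltW | by apply: ec].
rewrite ler_pdivrMl //.
have HS : (`|c x| + 1) / e x <= S.
  rewrite /S (bigD1 x) //= lerDl; apply: sumr_ge0 => y _; apply: divr_ge0 => //; exact: addr_ge0.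
have : (`|c x| + 1) <= S * e x.
  by move: HS; rewrite ler_pdivrMr.
have := ler_norm (c x); lra.
Qed.

Lemma sum2 (X : finType) (F : X -> R) x1 x2 : x1 != x2 ->
  (forall x, x != x1 -> x != x2 -> F x = 0) -> \sum_x F x = F x1 + F x2.
Proof.
move=> ne H; rewrite (bigD1 x1) //= (bigD1 x2) /=; last by rewrite eq_sym.
by rewrite big1 ?addr0 // => x /andP [h1 h2]; apply: H.
Qed.

Lemma sum1 (X : finType) (F : X -> R) x1 :
  (forall x, x != x1 -> F x = 0) -> \sum_x F x = F x1.
Proof.
move=> H; rewrite (bigD1 x1) //= big1 ?addr0 // => x /andP [_ h]; exact: H.
Qed.


Lemma sum_enum (T : finType) (g : T -> R) :
  \sum_(i < #|T|) g (enum_val i) = \sum_x g x.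
Proof. by rewrite -big_enum_val. Qed.

End Gen.
Arguments point_distr {R T} b.

Section Game.
Variables (R : realType) (A Omega M : finType) (mu0 : Omega -> R).

Definition Vm (u : A -> Omega -> R) (s : Omega -> M -> R) m b :=
  \sum_w mu0 w * s w m * u b w.

Lemma U_alt u s r : U mu0 u s r = \sum_m \sum_a r m a * Vm u s m a.
Proof.
rewrite /U exchange_big; apply: eq_bigr => m _.
rewrite exchange_big; apply: eq_bigr => a _.
rewrite /Vm mulr_sumr; apply: eq_bigr => w _; ring.
Qed.

Definition PMO uR s r := forall m (q : A -> R), is_distr q ->
  \sum_a q a * Vm uR s m a <= \sum_a r m a * Vm uR s m a.

Lemma RBR_PMO uR s r : R_BR mu0 uR s r -> PMO uR s r.
Proof.
move=> [Hs [Hr Hopt]] m q Hq.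
pose r' := fun m' => if m' == m then q else r m'.
have Hr' : action_strategy r' by move=> m'; rewrite /r'; case: eqP.
have := Hopt r' Hr'; rewrite !U_alt (bigD1 m) //= [X in _ <= X](bigD1 m) //= /r' eqxx.
have -> : \sum_(i | i != m) \sum_a (if i == m then q else r i) a * Vm uR s i a
  = \sum_(i | i != m) \sum_a r i a * Vm uR s i a.
  by apply: eq_bigr => i /negbTE ->.
by rewrite lerD2r.
Qed.

Lemma PMO_RBR uR s r : messaging_strategy s -> action_strategy r ->
  PMO uR s r -> R_BR mu0 uR s r.
Proof.
move=> Hs Hr H; split=> //; split=> // r' Hr'.
rewrite !U_alt; apply: ler_sum => m _; exact: H.
Qed.

Lemma PMO_opt uR s r : PMO uR s r -> action_strategy r ->
  forall m b, 0 < r m b -> forall b', Vm uR s m b' <= Vm uR s m b.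
Proof.
move=> H Hr m b hb b'.
have Hpt : forall b', Vm uR s m b' <= \sum_a r m a * Vm uR s m a.
  by move=> b0; have := H m _ (point_distr b0); rewrite sum_point.
rewrite (@distr_supp_eq _ _ _ _ (fun _ => True) (Hr m) _ _ b hb) //.

Qed.

End Game.

Lemma minn_aux k n : (minn k.+1 n <= minn k n)%N -> (n <= k)%N.
Proof. lia. Qed.

Section LinAlg.
Variables (R : realType) (A Omega : finType).

Lemma rowdot (uS uR : A -> Omega -> R) (a : A) (S : {set T_index Omega a}) p
  (K : 'M[R]_(#|Omega|, p)) k l :
  (T_submx uS uR S *m K) k l = \sum_w T_row uS uR (enum_val k) w * K (enum_rank w) l.
Proof.
rewrite !mxE -[RHS]sum_enum; apply: eq_bigr => i _; by rewrite mxE enum_valK.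
Qed.

Lemma exists_dir (uS uR : A -> Omega -> R) (a a' : A) (B : pred A) (z : pred Omega)
  (beta : Omega -> R) :
  scant_indifferences uS uR -> a' != a -> (exists w, beta w != 0) ->
  (forall w, z w -> beta w = 0) ->
  (forall b, B b -> \sum_w beta w * (uR b w - uR a w) = 0) ->
  exists d : Omega -> R, (forall w, z w -> d w = 0) /\
    (forall b, B b -> \sum_w d w * (uR b w - uR a w) = 0) /\
    \sum_w d w * (uS a' w - uS a w) != 0.
Proof.
move=> Hsc ne [w0 bw0] zb Bb.
pose S0 : {set T_index Omega a} := [set s | match s with
  | inl (inr j) => B (val j) | inr w => z w | _ => false end].
pose j' : {j : A | j != a} := exist _ a' ne.
pose s' : T_index Omega a := inl (inl j').
have s'S0 : s' \notin S0 by rewrite inE.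
pose n := #|Omega|.
pose r : 'rV[R]_n := \row_l T_row uS uR s' (enum_val l).
pose B0 := T_submx uS uR S0.
have rowS0 : forall s (Hs : s \in S0) p (K : 'M[R]_(n, p)) l,
    (B0 *m K) (enum_rank_in Hs s) l = \sum_w T_row uS uR s w * K (enum_rank w) l.
  by move=> s Hs p K l; rewrite rowdot enum_rankK_in.
case Hr: (r <= B0)%MS; last first.
  move/negbT: Hr; rewrite submxE => Hr.
  set K := cokermx B0 in Hr.
  have [l Hl] : exists l, (r *m K) 0 l != 0.
    case: (pickP (fun l => (r *m K) 0 l != 0)) => [l Hl|H0]; first by exists l.
    have rK0 : r *m K = 0.
      apply/matrixP => i j; rewrite ord1; apply/eqP; rewrite [X in _ == X]mxE.
      exact/negbFE/(H0 j).
    by rewrite rK0 eqxx in Hr.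
  have BK : B0 *m K = 0 by apply: mulmx_coker.
  exists (fun w => K (enum_rank w) l); split; [|split].
  - move=> w zw.
    have Hs : (inr w : T_index Omega a) \in S0 by rewrite inE.
    have := rowS0 _ Hs _ K l; rewrite BK mxE /= sum_point => <-; by [].
  - move=> b Bb'.
    case: (eqVneq b a) => [->|hb].
      by rewrite big1 // => w _; rewrite subrr mulr0.
    pose jb : {j : A | j != a} := exist _ b hb.
    have Hs : (inl (inr jb) : T_index Omega a) \in S0 by rewrite inE.
    have := rowS0 _ Hs _ K l; rewrite BK mxE /= => H; rewrite [RHS]H.
    by apply: eq_bigr => w _; rewrite mulrC.
  - have E : (r *m K) 0 l = \sum_w K (enum_rank w) l * (uS a' w - uS a w).
      rewrite mxE -[RHS]sum_enum; apply: eq_bigr => i _; by rewrite mxE enum_valK mulrC.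
    by rewrite -E.
exfalso.
have S1B0 : (T_submx uS uR (s' |: S0) <= B0)%MS.
  apply/row_subP => k.
  have := enum_valP k; rewrite in_setU1 => /orP [/eqP ek|ek].
    have -> : row k (T_submx uS uR (s' |: S0)) = r.
      by apply/rowP => l; rewrite !mxE ek.
    by rewrite Hr.
  have -> : row k (T_submx uS uR (s' |: S0)) = row (enum_rank_in ek (enum_val k)) B0.
    by apply/rowP => l; rewrite !mxE enum_rankK_in.
  exact: row_sub.
have := mxrankS S1B0; rewrite !Hsc cardsU1 s'S0 /= add1n => Hmin.
have Hn : (n <= #|S0|)%N by apply: minn_aux Hmin.
have Hfull : row_full B0 by rewrite -col_leq_rank /B0 Hsc leq_min Hn leqnn.
pose bv : 'cV[R]_n := \col_l beta (enum_val l).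
have Bb0 : B0 *m bv = 0.
  apply/matrixP => k i; rewrite ord1 [RHS]mxE.
  have Hk := enum_valP k.
  have := rowS0 _ Hk _ bv 0; rewrite enum_valK_in => ->.
  under eq_bigr do rewrite mxE enum_rankK.
  move: Hk; rewrite inE; case: (enum_val k) => [[j|j]|w] //= Hk.
    by rewrite -[RHS](Bb _ Hk); apply: eq_bigr => w _; rewrite mulrC.
  by rewrite sum_point zb.
have := sub1mx B0; rewrite Hfull => /submxP [D HD].
have : bv = 0 by rewrite -[bv]mul1mx HD -mulmxA Bb0 mulmx0.
move/matrixP => /(_ (enum_rank w0) 0); rewrite !mxE enum_rankK => H.
by move: bw0; rewrite H eqxx.
Qed.

End LinAlg.

Section Split.
Variables (R : realType) (A Omega M : finType) (mu0 : Omega -> R).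

Lemma split_improve (uS uR : A -> Omega -> R) (s : Omega -> M -> R) r m m2 a a' :
  (forall w, 0 < mu0 w) -> scant_indifferences uS uR -> R_BR mu0 uR s r ->
  m2 != m -> (forall w, s w m2 = 0) -> (exists w, 0 < s w m) ->
  a' != a -> 0 < r m a -> 0 < r m a' ->
  exists (s2 : Omega -> M -> R) (r2 : M -> A -> R), R_BR mu0 uR s2 r2 /\ U mu0 uS s r < U mu0 uS s2 r2.
Proof.
move=> hmu Hsc HBR hm2 s0 [w0 hw0] ne ha ha'.
have hmu0 : forall w, mu0 w != 0 by move=> w; apply: lt0r_neq0.
have HP := RBR_PMO HBR. have [Hs [Hr _]] := HBR.
have optA := PMO_opt HP Hr ha.
have optA' := PMO_opt HP Hr ha'.
have eqaa' : Vm mu0 uR s m a' = Vm mu0 uR s m a by apply/eqP; rewrite eq_le optA optA'.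
set W := \sum_b r m b * Vm mu0 uS s m b.
case: (pickP (fun b => (Vm mu0 uR s m b == Vm mu0 uR s m a) && (W < Vm mu0 uS s m b)))
  => [b /andP [/eqP hbR hbS] | Hno].
  pose r2 := fun m' => if m' == m then (fun x : A => ((x == b)%:R : R)) else r m'.
  exists s, r2; split.
    apply: PMO_RBR => //.
      by move=> m'; rewrite /r2; case: eqP => _ //; apply: point_distr.
    move=> m' q Hq; rewrite /r2; case: eqP => [->|_]; last exact: HP.
    rewrite sum_point; apply: distr_le Hq _ => b'; rewrite hbR; exact: optA.
  rewrite !U_alt -subr_gt0 -sumrB (@sum1 _ _ _ m); last first.
    by move=> x hx; rewrite /r2 (negbTE hx) subrr.
  by rewrite /r2 eqxx sum_point subr_gt0.
have supp : forall b, 0 < r m b -> Vm mu0 uR s m b = Vm mu0 uR s m a.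
  move=> b hb; apply/eqP; rewrite eq_le optA; exact: (PMO_opt HP Hr hb).
have HSeq := @distr_supp_eq _ _ (r m) (Vm mu0 uS s m)
   (fun b => Vm mu0 uR s m b = Vm mu0 uR s m a) (Hr m) supp.
have HSeq' : forall b, 0 < r m b -> Vm mu0 uS s m b = W.
  apply: HSeq => b hb; move: (Hno b); rewrite hb eqxx /= => /negbT; by rewrite -leNgt.
have VSa := HSeq' _ ha. have VSa' := HSeq' _ ha'.
have Hd := exists_dir (B := fun b => Vm mu0 uR s m b == Vm mu0 uR s m a)
   (z := fun w => s w m == 0) (beta := fun w => mu0 w * s w m) Hsc ne.
have H1 : exists w, mu0 w * s w m != 0.
  by exists w0; rewrite mulf_neq0 // lt0r_neq0.
have H2 : forall w, s w m == 0 -> mu0 w * s w m = 0.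
  by move=> w /eqP ->; rewrite mulr0.
have H3 : forall b, Vm mu0 uR s m b == Vm mu0 uR s m a ->
    \sum_w mu0 w * s w m * (uR b w - uR a w) = 0.
  move=> b /eqP hb.
  have -> : \sum_w mu0 w * s w m * (uR b w - uR a w) = Vm mu0 uR s m b - Vm mu0 uR s m a.
    by rewrite /Vm -sumrB; apply: eq_bigr => w _; ring.
  by rewrite hb subrr.
have [d [d0 [dR dS]]] := Hd H1 H2 H3.
set G := \sum_w d w * (uS a' w - uS a w) in dS.
pose dd := fun w => G * d w.
pose D := fun (u : A -> Omega -> R) b => \sum_w dd w * u b w.
have Dsub : forall u b b', D u b - D u b' = G * \sum_w d w * (u b w - u b' w).
  by move=> u b b'; rewrite /D -sumrB mulr_sumr; apply: eq_bigr => w _; rewrite /dd; ring.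
have DRB : forall b, Vm mu0 uR s m b = Vm mu0 uR s m a -> D uR b = D uR a.
  move=> b hb; apply/eqP; rewrite -subr_eq0 Dsub dR ?mulr0 //=; by apply/eqP.
have DSpos : 0 < D uS a' - D uS a.
  by rewrite Dsub -/G lt0r mulf_neq0 // -expr2 sqr_ge0.
pose c := fun x : (Omega + A)%type => match x with
  | inl w => `|dd w / mu0 w| | inr b => `|D uR b - D uR a| end.
pose e := fun x : (Omega + A)%type => match x with
  | inl w => s w m / 2 | inr b => (Vm mu0 uR s m a - Vm mu0 uR s m b) / 2 end.
have He1 : forall x, 0 <= e x.
  case=> [w|b] /=.
    by apply: divr_ge0 => //; exact: ((Hs w).1 m).
  by apply: divr_ge0 => //; rewrite subr_ge0; exact: optA.
have He2 : forall x, e x = 0 -> c x <= 0.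
  case=> [w|b] /= h.
    have h' : s w m = 0 by lra.
    by rewrite /dd d0 /= ?h' ?eqxx // mulr0 mul0r normr0.
  have h' : Vm mu0 uR s m b = Vm mu0 uR s m a by lra.
  by rewrite DRB // subrr normr0.
have [tau [htau Htau]] := @tau_exists _ _ c e He1 He2.
have Hw : forall w, - (s w m / 2) <= tau * (dd w / mu0 w) <= s w m / 2.
  by move=> w; rewrite -ler_norml normrM gtr0_norm //; exact: (Htau (inl w)).
have Hb : forall b, - ((Vm mu0 uR s m a - Vm mu0 uR s m b) / 2) <= tau * (D uR b - D uR a)
     <= (Vm mu0 uR s m a - Vm mu0 uR s m b) / 2.
  by move=> b; rewrite -ler_norml normrM gtr0_norm //; exact: (Htau (inr b)).
pose x := fun w => dd w / mu0 w.
pose s2 := fun w m' => if m' == m then s w m / 2 + tau * x w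
  else if m' == m2 then s w m / 2 - tau * x w else s w m'.
pose r2 := fun m' => if m' == m then (fun y : A => ((y == a')%:R : R))
  else if m' == m2 then (fun y : A => ((y == a)%:R : R)) else r m'.
have hmm2 : (m2 == m) = false by apply: negbTE.
have hm2m : (m == m2) = false by rewrite eq_sym.
have Vm1 : forall (u : A -> Omega -> R) (b : A), Vm mu0 u s2 m b = Vm mu0 u s m b / 2 + tau * D u b.
  move=> u b; rewrite /Vm /D mulr_suml mulr_sumr -big_split /=; apply: eq_bigr => w _.
  rewrite /s2 eqxx /x /dd; field; exact: hmu0.
have Vm2 : forall (u : A -> Omega -> R) (b : A), Vm mu0 u s2 m2 b = Vm mu0 u s m b / 2 - tau * D u b.
  move=> u b; rewrite /Vm /D mulr_suml mulr_sumr -sumrB /=; apply: eq_bigr => w _.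
  rewrite /s2 hmm2 eqxx /x /dd; field; exact: hmu0.
have Vm0 : forall (u : A -> Omega -> R) (b : A), Vm mu0 u s m2 b = 0.
  by move=> u b; rewrite /Vm; apply: big1 => w _; rewrite s0 mulr0 mul0r.
have hmm2' : m != m2 by rewrite eq_sym.
exists s2, r2; split.
  apply: PMO_RBR.
  - move=> w; split.
      move=> m'; rewrite /s2; case: eqP => _; [|case: eqP => _]; last exact: ((Hs w).1 m').
        by have := Hw w; rewrite -/(x w) => /andP [l1 l2]; lra.
      by have := Hw w; rewrite -/(x w) => /andP [l1 l2]; lra.
    rewrite -(Hs w).2; apply/eqP; rewrite -subr_eq0 -sumrB (@sum2 _ _ _ m m2) //.
      by rewrite /s2 eqxx hmm2 eqxx s0 /=; apply/eqP; lra.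
    by move=> y h1 h2; rewrite /s2 (negbTE h1) (negbTE h2) subrr.
  - move=> m'; rewrite /r2; case: eqP => _; first exact: point_distr.
    by case: eqP => _; [exact: point_distr | exact: Hr].
  - move=> m' q Hq; case: (eqVneq m' m) => [->|h1].
      rewrite /r2 eqxx sum_point; apply: distr_le Hq _ => b.
      rewrite !Vm1 (DRB a') //; have := Hb b => /andP [l1 l2].
      rewrite mulrBr in l1 l2; lra.
    case: (eqVneq m' m2) => [->|h2].
      rewrite /r2 hmm2 eqxx sum_point; apply: distr_le Hq _ => b.
      rewrite !Vm2; have := Hb b => /andP [l1 l2].
      rewrite mulrBr in l1 l2; lra.
    rewrite /r2 /Vm /s2 (negbTE h1) (negbTE h2); exact: HP.
rewrite !U_alt -subr_gt0 -sumrB (@sum2 _ _ _ m m2) //; last first.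
  by move=> y h1 h2; rewrite /r2 /Vm /s2 (negbTE h1) (negbTE h2) subrr.
have Z : \sum_b r m2 b * Vm mu0 uS s m2 b = 0.
  by rewrite big1 // => b _; rewrite Vm0 mulr0.
rewrite /r2 eqxx hmm2 eqxx /= !sum_point Vm1 Vm2 Z -/W.
have := mulr_gt0 htau DSpos; rewrite mulrBr => P.
lra.
Qed.

End Split.

Section Free.
Variables (R : realType) (A Omega M : finType) (mu0 : Omega -> R).

Lemma dep_exists (s : Omega -> M -> R) : (#|Omega| < #|M|)%N ->
  exists c : M -> R, (forall w, \sum_m' c m' * s w m' = 0) /\ exists m', c m' != 0.
Proof.
move=> hlt.
pose X : 'M[R]_(#|M|, #|Omega|) := \matrix_(i, l) s (enum_val l) (enum_val i).
have nf : ~~ row_free X.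
  rewrite /row_free; apply/negP => /eqP h; have := rank_leq_col X.
  by rewrite h leqNgt hlt.
have hK : kermx X != 0 by rewrite kermx_eq0.
have KX : kermx X *m X = 0 := mulmx_ker X.
set K := kermx X in hK KX; clearbody K.
have [i [j hij]] : exists i j, K i j != 0.
  case: (pickP (fun p : 'I_#|M| * 'I_#|M| => K p.1 p.2 != 0)) => [[i j] h|h].
    by exists i, j.
  exfalso; move: hK; suff -> : K = 0 by rewrite eqxx.
  apply/matrixP => i j; rewrite [RHS]mxE; by move: (h (i, j)) => /= /negbFE /eqP.
exists (fun m' => K i (enum_rank m')); split.
  move=> w.
  have H : (K *m X) i (enum_rank w) = 0 by rewrite KX mxE.
  rewrite -[RHS]H mxE -[LHS]sum_enum; apply: eq_bigr => k _.
  by rewrite mxE enum_valK enum_rankK.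
by exists (enum_val j); rewrite enum_valK.
Qed.

Lemma free_msg (uS uR : A -> Omega -> R) (s : Omega -> M -> R) r m :
  (#|Omega| < #|M|)%N -> R_BR mu0 uR s r -> attains_persuasion_payoff mu0 uS uR s r ->
  (exists w, 0 < s w m) ->
  exists (s' : Omega -> M -> R) m2, R_BR mu0 uR s' r /\ U mu0 uS s r <= U mu0 uS s' r /\
    m2 != m /\ (forall w, s' w m2 = 0) /\ (exists w, 0 < s' w m).
Proof.
move=> hlt HBR Hatt [w0 hw0].
have [Hs [Hr _]] := HBR. have HP := RBR_PMO HBR.
have [c0 [dep0 [m1 hm1]]] := dep_exists s hlt.
have posc : forall c : M -> R, (forall w, \sum_m' c m' * s w m' = 0) -> c m < 0 ->
    exists m3, 0 < c m3.
  move=> c dep cm.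
  case: (pickP (fun m3 => 0 < c m3)) => [m3 h|h]; first by exists m3.
  exfalso; have := dep w0; rewrite (bigD1 m) //=.
  have : \sum_(i | i != m) c i * s w0 i <= 0.
    apply: sumr_le0 => i _; apply: mulr_le0_ge0; last exact: ((Hs w0).1 i).
    by rewrite leNgt h.
  have : c m * s w0 m < 0 by rewrite pmulr_llt0.
  lra.
have [c [dep [hcm [m3 hm3]]]] : exists c : M -> R,
    (forall w, \sum_m' c m' * s w m' = 0) /\ c m <= 0 /\ exists m3, 0 < c m3.
  have depN : forall w, \sum_m' (- c0 m') * s w m' = 0.
    by move=> w; under eq_bigr do rewrite mulNr; rewrite sumrN dep0 oppr0.
  case: (ltgtP (c0 m) 0) => h.
  - exists c0; split=> //; split; [exact: ltW | exact: posc].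
  - exists (fun m' => - c0 m'); split=> //; split; first by rewrite oppr_le0 ltW.
    by apply: posc => //; rewrite oppr_lt0.
  - case: (ltgtP (c0 m1) 0) => h1.
    + exists (fun m' => - c0 m'); split => //; split; first by rewrite h oppr0.
      by exists m1; rewrite oppr_gt0.
    + exists c0; split=> //; split; [by rewrite h | by exists m1].
    + by rewrite h1 eqxx in hm1.
have [m2 _ Hm2] := @arg_maxP _ _ M m3 predT c isT.
have hcs : 0 < c m2 by apply: lt_le_trans hm3 (Hm2 m3 isT).
pose st := fun (t : R) w m' => (1 + t * c m') * s w m'.
have Vt : forall t (u : A -> Omega -> R) m' b,
    Vm mu0 u (st t) m' b = (1 + t * c m') * Vm mu0 u s m' b.
  by move=> t u m' b; rewrite /Vm mulr_sumr; apply: eq_bigr => w _; rewrite /st; ring.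
pose sS := \sum_m' c m' * \sum_a r m' a * Vm mu0 uS s m' a.
have Ut : forall t, U mu0 uS (st t) r = U mu0 uS s r + t * sS.
  move=> t; rewrite !U_alt /sS mulr_sumr -big_split /=; apply: eq_bigr => m' _.
  have -> : \sum_a r m' a * Vm mu0 uS (st t) m' a
      = (1 + t * c m') * \sum_a r m' a * Vm mu0 uS s m' a.
    by rewrite mulr_sumr; apply: eq_bigr => a _; rewrite Vt; ring.
  ring.
have RBt : forall t, (forall m', 0 <= 1 + t * c m') -> R_BR mu0 uR (st t) r.
  move=> t ht; apply: PMO_RBR => //.
    move=> w; split.
      by move=> m'; rewrite /st; apply: mulr_ge0 => //; exact: ((Hs w).1 m').
    rewrite -(Hs w).2 /st.
    under eq_bigr do rewrite mulrDl mul1r.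
    rewrite big_split /= -[RHS]addr0; congr (_ + _).
    under eq_bigr do rewrite -mulrA.
    by rewrite -mulr_sumr dep mulr0.
  move=> m' q Hq.
  have E : forall (p : A -> R), \sum_a p a * Vm mu0 uR (st t) m' a
      = (1 + t * c m') * \sum_a p a * Vm mu0 uR s m' a.
    by move=> p; rewrite mulr_sumr; apply: eq_bigr => a _; rewrite Vt; ring.
  rewrite !E; apply: ler_wpM2l; [exact: ht | exact: HP].
have He1 : forall m' : M, (0 : R) <= 1 by move=> _; exact: ler01.
have He2 : forall m' : M, (1 : R) = 0 -> - c m' <= 0.
  by move=> m' /eqP; rewrite oner_eq0.
have [eps [heps Heps]] := @tau_exists _ _ (fun m' => - c m') (fun _ => 1) He1 He2.
clear He1 He2.
have Heps' : forall m', 0 <= 1 + eps * c m'.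
  by move=> m'; have := Heps m'; rewrite /= mulrN; lra.
have := Hatt _ _ (RBt eps Heps'); rewrite Ut => hle.
have sS0 : sS <= 0.
  have : eps * sS <= 0 by lra.
  by rewrite pmulr_rle0.
pose ts := - (c m2)^-1.
have hts : forall m', 0 <= 1 + ts * c m'.
  move=> m'; have : (c m2)^-1 * c m' <= 1.
    by rewrite ler_pdivrMl // mulr1; exact: Hm2.
  rewrite /ts mulNr; lra.
exists (st ts), m2; split; first exact: RBt.
split.
  rewrite Ut; have : 0 <= ts * sS.
    by rewrite /ts mulNr oppr_ge0; apply: mulr_ge0_le0 => //; rewrite invr_ge0 ltW.
  lra.
split.
  apply/negP => /eqP e; move: hcs; rewrite e => h; lra.
split.
  by move=> w; rewrite /st /ts mulNr mulVf ?subrr ?mul0r // lt0r_neq0.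
exists w0; rewrite /st; apply: mulr_gt0 => //.
have : 0 <= ts * c m.
  by rewrite /ts mulNr oppr_ge0; apply: mulr_ge0_le0 => //; rewrite invr_ge0 ltW.
lra.
Qed.

End Free.

Unset Implicit Arguments.
Set Strict Implicit.

Theorem lemma4 (R : realType) (A Omega M : finType)
  (mu0 : Omega -> R) (uS uR : A -> Omega -> R)
  (sigma : Omega -> M -> R) (rho : M -> A -> R) :
  (0 < #|A|)%N -> (0 < #|Omega|)%N ->
  (maxn #|Omega| #|A| < #|M|)%N ->
  (forall w, 0 < mu0 w) -> \sum_(w : Omega) mu0 w = 1 ->
  (forall a w, 0 <= uS a w <= 1) -> (forall a w, 0 <= uR a w <= 1) ->
  scant_indifferences uS uR ->
  R_BR mu0 uR sigma rho ->
  attains_persuasion_payoff mu0 uS uR sigma rho ->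
  pure_on_path sigma rho.
Proof.
move=> hA hO hM hmu hsum huS huR Hsc HBR Hatt m Hon.
have hlt : (#|Omega| < #|M|)%N by move: hM; rewrite gtn_max => /andP [].
have [Hs [Hr _]] := HBR.
have [Hd1 Hd2] := Hr m.
have [a ha] : exists a, 0 < rho m a.
  case: (pickP (fun a => 0 < rho m a)) => [a h|h]; first by exists a.
  exfalso; have : \sum_a rho m a = 0.
    apply: big1 => a _; apply/eqP; rewrite eq_le Hd1 andbT leNgt; exact/negbT/h.
  by rewrite Hd2 => /eqP; rewrite oner_eq0.
case: (pickP (fun a' => (a' != a) && (0 < rho m a'))) => [a' /andP [ne ha'] | H1].
  exfalso.
  have [s' [m2 [HBR' [hU [hm2 [s0 Hon']]]]]] := free_msg hlt HBR Hatt Hon.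
  have [s2 [r2 [HBR2 hU2]]] := split_improve hmu Hsc HBR' hm2 s0 Hon' ne ha ha'.
  have := Hatt _ _ HBR2; lra.
exists a => t; case: (eqVneq t a) => [->|ht].
  move: Hd2; rewrite (bigD1 a) //= big1 ?addr0 //.
  move=> b hb; apply/eqP; rewrite eq_le Hd1 andbT leNgt.
  by have := H1 b; rewrite /= hb /= => ->.
have := H1 t; rewrite /= ht /= => /negbT; rewrite -leNgt => h.
by apply/eqP; rewrite eq_le h Hd1.
Qed.
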